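(* Let $k$ be an algebraically closed field of characteristic $p>0$. Let $H$ be a finite group whose order is divisible by $p$ and which is generated by its elements of order prime to $p$. Let $r\neq p$ be a prime and let $A$ be a finite irreducible $\mathbb{F}_rH$-module (an elementary abelian $r$-group with $H$-action) such that $H$ has a regular orbit on $\mathrm{Hom}(A,k^* )$. Let $G = A\rtimes H$. Let $W$ be a $1$-dimensional $kA$-module affording a character $\lambda\in\mathrm{Hom}(A,k^* )$ lying in a regular $H$-orbit, and let $V = \mathrm{Ind}_A^G(W)$. Then $(G,V)$ is not weakly adequate.
   Context: For a representation $\rho:G\to\mathrm{GL}(V)$, $(G,V)$ is weakly adequate if $\mathrm{End}_k(V)$ is spanned by $\{\rho(g): g\in G,\ \rho(g)\text{ semisimple}\}$. A regular orbit is one on which $H$ acts with trivial stabilizers. *)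

(* Defs.v *)
From HB Require Import structures.
From mathcomp Require Import all_boot all_order all_fingroup all_solvable all_algebra.
Set Implicit Arguments. Unset Strict Implicit. Unset Printing Implicit Defensive.
Import GRing.Theory.
Local Open Scope ring_scope.

Definition is_char_hom (k : fieldType) (gT : finGroupType) (A : {set gT})
    (lam : gT -> k) : Prop :=
  {in A &, {morph lam : x y / (x * y)%g >-> x * y}} /\ {in A, forall a, lam a != 0}.

(* lam lies in a regular H-orbit for the action (h.lam)(a) = lam(a^h):
   its stabilizer in H is trivial. *)
Definition regular_char (k : fieldType) (gT : finGroupType) (A H : {set gT})
    (lam : gT -> k) : Prop :=
  forall h, h \in H -> {in A, forall a, lam (a ^ h)%g = lam a} -> h = 1%g.

(* Matrix of g in Ind_A^G(W), W affording lam, with respect to the basis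
   indexed by the transversal H of A in G (G = A ><| H):
   rho(g)_{s,t} = lam(s^-1 g t) if s^-1 g t \in A, and 0 otherwise. *)
Definition ind_mx (k : fieldType) (gT : finGroupType) (A H : {set gT})
    (lam : gT -> k) (g : gT) : 'M[k]_#|H| :=
  \matrix_(i, j)
    let x := ((enum_val i)^-1 * g * enum_val j)%g in
    if x \in A then lam x else 0.

(* (G, rho) is weakly adequate: End_k(V) is spanned by the rho(g), g in G,
   with rho(g) semisimple (= diagonalizable, k algebraically closed). *)
Definition weakly_adequate (k : fieldType) (gT : finGroupType) (G : {set gT})
    (n : nat) (rho : gT -> 'M[k]_n) : Prop :=
  forall M : 'M[k]_n, exists c : gT -> k,
    (forall g, g \in G -> c g != 0 -> diagonalizable (rho g)) /\
    M = \sum_(g in G) c g *: rho g.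

(* Main.v *)
Require Import Defs.
From HB Require Import structures.
From mathcomp Require Import all_boot all_order all_fingroup all_solvable all_algebra.
Import GRing.Theory.
Local Open Scope ring_scope.

Lemma diag_pow (k : fieldType) n (d : 'rV[k]_n) m :
  diag_mx d ^+ m = diag_mx (\row_j (d 0 j ^+ m)).
Proof.
elim: m => [|m IH].
  by apply/matrixP => i j; rewrite !mxE.
by rewrite exprS IH -mulmxE mulmx_diag; congr diag_mx; apply/matrixP => i j; rewrite !mxE exprS.
Qed.

Lemma conj_pow (k : fieldType) n (P M : 'M[k]_n) m : P \in unitmx ->
  (P *m M *m invmx P) ^+ m = P *m M ^+ m *m invmx P.
Proof.
move=> Pu; elim: m => [|m IH].
  by rewrite !expr0 mulmx1 mulmxV.
rewrite exprS IH !exprS -!mulmxE !mulmxA mulmxKV //.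
Qed.

Lemma diag_frob (k : fieldType) n (M : 'M[k]_n) p r :
  p \in [pchar k] -> diagonalizable M -> M ^+ (p * r) = 1 -> M ^+ r = 1.
Proof.
move=> pch [P Pu] HD Mpr; move: HD; rewrite /similar_to /= conjumx // => /diag_mxP [d Hd].
have Hpr : forall j, d 0 j ^+ (p * r) = 1.
  move=> j; have := @conj_pow _ _ P M (p * r) Pu; rewrite Hd diag_pow Mpr mulmx1 mulmxV //.
  by move/matrixP => /(_ j j); rewrite !mxE eqxx.
have Hr : forall j, d 0 j ^+ r = 1.
  move=> j; apply/eqP; rewrite -subr_eq0.
  have := pFrobenius_autB_comm pch (commr1 (d 0 j ^+ r)).
  rewrite !pFrobenius_autE expr1n -exprM mulnC Hpr subrr => /eqP.
  by rewrite expf_eq0 => /andP [].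
have := @conj_pow _ _ P M r Pu; rewrite Hd diag_pow.
have -> : diag_mx (\row_j (d 0 j ^+ r)) = 1.
  by apply/matrixP => i j; rewrite !mxE Hr.
move=> e; have := congr1 (fun X => invmx P *m X *m P) e.
by rewrite mulmx1 mulVmx // !mulmxA mulVmx // mul1mx mulmxKV // => ->.
Qed.
Lemma ind_mul (k : fieldType) (gT : finGroupType) (G A H : {group gT}) (lam : gT -> k) :
  (A ><| H)%g = G -> is_char_hom A lam ->
  {in G &, forall x y, ind_mx A H lam x *m ind_mx A H lam y = ind_mx A H lam (x * y)%g}.
Proof.
move=> sd [hm _] x y xG yG; have [_ sHG AHG nAH tI] := sdprod_context sd.
apply/matrixP => i j; rewrite !mxE.
have sH : enum_val i \in H := enum_valP i.
have : ((enum_val i)^-1 * x)%g \in (A * H)%g. rewrite AHG groupM // groupV (subsetP sHG) //.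
case/mulsgP => a h aA hH e.
have uH : (h^-1)%g \in H by rewrite groupV.
rewrite (bigD1 (enum_rank_in uH (h^-1)%g)) //= big1 ?addr0.
  rewrite !mxE enum_rankK_in // e mulgK invgK mulgA e /= aA -!mulgA.
  case: ifP => hA; first by rewrite (groupMl _ aA) hA (hm _ _ aA hA).
  by rewrite (groupMl _ aA) hA mulr0.
move=> u nu; rewrite !mxE e.
rewrite /=; case: ifP => hA; last by rewrite mul0r.
exfalso; move: hA; rewrite -mulgA groupMl // => huA.
have : (h * enum_val u)%g \in (A :&: H)%g by rewrite inE huA groupM // enum_valP.
rewrite tI inE => /eqP /(canRL (mulKg h)); rewrite mulg1 => ev.
by move/negP: nu; apply; apply/eqP; apply: enum_val_inj; rewrite enum_rankK_in.
Qed.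
Lemma lam1 (k : fieldType) (gT : finGroupType) (A : {group gT}) (lam : gT -> k) :
  is_char_hom A lam -> lam 1%g = 1.
Proof.
move=> [hm hnz]; have := hm 1%g 1%g (group1 A) (group1 A); rewrite mulg1 => e.
by apply: (mulfI (hnz 1%g (group1 A))); rewrite mulr1 -e.
Qed.

Lemma ind_one (k : fieldType) (gT : finGroupType) (G A H : {group gT}) (lam : gT -> k) :
  (A ><| H)%g = G -> is_char_hom A lam -> ind_mx A H lam 1%g = 1.
Proof.
move=> sd hl; have [_ sHG AHG nAH tI] := sdprod_context sd.
apply/matrixP => i j; rewrite !mxE mulg1.
case: (eqVneq i j) => [->|ne]; first by rewrite mulVg /= group1 (@lam1 _ _ _ _ hl).
rewrite /=; case: ifP => // hA; exfalso.
have : ((enum_val i)^-1 * enum_val j)%g \in (A :&: H)%g.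
  by rewrite inE hA groupM ?groupV ?enum_valP.
rewrite tI inE -eq_mulVg1 => /eqP /enum_val_inj e.
by rewrite e eqxx in ne.
Qed.

Lemma coset_pow (gT : finGroupType) (A H : {group gT}) h a :
  H \subset 'N(A)%g -> h \in H -> a \in A ->
  forall m, exists2 b, b \in A & ((h * a) ^+ m = h ^+ m * b)%g.
Proof.
move=> nAH hH aA; elim=> [|m [b bA e]].
  by exists 1%g; rewrite ?group1 // expg0 mulg1.
exists ((b ^ h) * a)%g; first by rewrite groupM // memJ_norm // (subsetP nAH).
rewrite expgSr e expgSr /conjg -!mulgA; congr (_ * _)%g.
by rewrite mulKVg.
Qed.

Arguments ind_one {k gT G A H lam}.
Arguments ind_mul {k gT G A H lam}.
Arguments coset_pow {gT A H h a}.
Arguments diag_frob {k n M p r}.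

Lemma ind_pow (k : fieldType) (gT : finGroupType) (G A H : {group gT}) (lam : gT -> k) x :
  (A ><| H)%g = G -> is_char_hom A lam -> x \in G ->
  forall m, ind_mx A H lam (x ^+ m)%g = ind_mx A H lam x ^+ m.
Proof.
move=> sd hl xG; elim=> [|m IH]; first by rewrite expg0 expr0 (ind_one sd hl).
by rewrite expgS exprS -IH -mulmxE (ind_mul sd hl) // groupX.
Qed.

Arguments ind_pow {k gT G A H lam x}.

Lemma not_diag (k : fieldType) (gT : finGroupType) (G A H : {group gT}) (lam : gT -> k)
    p r h a :
  p \in [pchar k] -> prime r -> r != p -> (r.-abelem A)%g ->
  (A ><| H)%g = G -> is_char_hom A lam -> h \in H -> #[h]%g = p -> a \in A ->
  ~ diagonalizable (ind_mx A H lam (h * a)%g).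
Proof.
move=> pch pr rp abA sd hl hH oh aA D.
have pp := pcharf_prime pch.
have [nAG sHG AHG nAH tI] := sdprod_context sd.
have [_ expA] := abelemP pr abA.
have gG : (h * a)%g \in G by apply: groupM; [exact: (subsetP sHG h hH) | exact: (subsetP (normal_sub nAG) a aA)].
have [b bA eb] := coset_pow nAH hH aA p.
have gpr : ((h * a) ^+ (p * r) = 1)%g.
  by rewrite expgM eb -oh expg_order mul1g expA.
have Mpr : ind_mx A H lam (h * a)%g ^+ (p * r) = 1.
  by rewrite -(ind_pow sd hl gG) gpr (ind_one sd hl).
have Mr := diag_frob pch D Mpr.
rewrite -(ind_pow sd hl gG) in Mr.
have [c cA ec] := coset_pow nAH hH aA r.
rewrite ec in Mr.
have H1 : (1%g : gT) \in H := group1 H.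
move/matrixP: Mr => /(_ (enum_rank_in H1 1%g) (enum_rank_in H1 1%g)).
rewrite !mxE enum_rankK_in // invg1 mul1g mulg1 eqxx /=.
case: ifP => hA; last by move/eqP; rewrite eq_sym oner_eq0.
move=> _; move: hA; rewrite groupMr // => hA.
have : (h ^+ r)%g \in (A :&: H)%g by rewrite inE hA groupX.
rewrite tI inE -order_dvdn oh dvdn_prime2 // eq_sym.
by rewrite (negbTE rp).
Qed.

Arguments not_diag {k gT G A H lam p r h a}.

Theorem theorem5p2 (k : closedFieldType) (p : nat) (gT : finGroupType)
    (G A H : {group gT}) (r : nat) (lam : gT -> k) :
  p \in [pchar k] ->
  (p %| #|H|)%N ->
  <<[set x in H | p^'.-elt x]>>%g = H ->
  prime r -> r != p ->
  (r.-abelem A)%g ->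
  (A ><| H)%g = G ->
  acts_irreducibly H A 'J ->
  (exists mu : gT -> k, is_char_hom A mu /\ regular_char A H mu) ->
  is_char_hom A lam ->
  regular_char A H lam ->
  ~ weakly_adequate G (ind_mx A H lam).
Proof.
move=> pch pH _ pr rp abA sd _ _ hl _ wa.
have pp := pcharf_prime pch.
have [h hH oh] := Cauchy pp pH.
have H1 : (1%g : gT) \in H := group1 H.
have [c [cd eM]] := wa (delta_mx (enum_rank_in H1 h) (enum_rank_in H1 1%g)).
move/matrixP: eM => /(_ (enum_rank_in H1 h) (enum_rank_in H1 1%g)).
rewrite /= summxE mxE !eqxx /= big1.
  by move/eqP; rewrite oner_eq0.
move=> g gG; rewrite !mxE !enum_rankK_in // mulg1 /=.
case: ifP => gA; last by rewrite mulr0.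
case: (eqVneq (c g) 0) => [->|/(cd g gG) Dg]; first by rewrite mul0r.
exfalso; apply: (not_diag pch pr rp abA sd hl hH oh gA).
by rewrite mulKVg.
Qed.
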